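(* There exists an $\mathrm{RDCQS}(8^{4}:2)$.
   Context: A candelabra quadruple system $\mathrm{CQS}(g^n:s)$ is a quadruple $(X,S,\mathcal{G},\mathcal{A})$ where $S\subseteq X$ with $|S|=s$ (the stem), $\mathcal{G}$ is a partition of $X\setminus S$ into $n$ groups of size $g$, and $\mathcal{A}$ is a set of $4$-subsets of $X$ such that every $3$-subset of $X$ not contained in $S\cup G$ for any $G\in\mathcal{G}$ lies in exactly one block, while no $3$-subset of any $S\cup G$ lies in a block. For $x\in X$ let $\mathcal{A}_x=\{A\setminus\{x\}:x\in A\in\mathcal{A}\}$. A parallel class (PC) of a set $Y$ is a set of pairwise disjoint blocks whose union is $Y$. An incomplete Kirkman triple system $\mathrm{KTS}(v,h)$ is a triple $(Y,H,\mathcal{B})$ with $|Y|=v$, $H\subseteq Y$, $|H|=h$, $\mathcal{B}$ a set of $3$-subsets such that each pair of $Y$ not contained in $H$ lies in exactly one block and no pair inside $H$ lies in a block, and $\mathcal{B}$ partitions into $\frac{v-h}{2}$ PCs of $Y$ and $\frac{h-1}{2}$ PCs of $Y\setminus H$. A Kirkman frame $\mathrm{KF}(g^n)$ on a set $Z$ with a partition $\mathcal{G}$ into $n$ groups of size $g$ is a set of $3$-subsets, each meeting every group in at most one point, such that every pair of points from distinct groups lies in exactly one block, and whose blocks can be partitioned into classes each being a PC of $Z\setminus G$ for some $G\in\mathcal{G}$. An $\mathrm{RDCQS}(g^n:s)$ is a $\mathrm{CQS}(g^n:s)$ such that for each $x\in G\in\mathcal{G}$, $(X\setminus\{x\},(G\cup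 S)\setminus\{x\},\mathcal{A}_x)$ is a $\mathrm{KTS}(gn+s-1,g+s-1)$, and for each $x\in S$, $\mathcal{A}_x$ is a $\mathrm{KF}(g^n)$ on $X\setminus S$ with group set $\mathcal{G}$. *)

(* Defs.v *)
From mathcomp Require Import all_boot.
Set Implicit Arguments. Unset Strict Implicit. Unset Printing Implicit Defensive.

Section Designs.
Variable T : finType.

Definition is_PC (C : {set {set T}}) (Z : {set T}) : bool :=
  trivIset C && (cover C == Z).

Definition nblocks (B : {set {set T}}) (p : {set T}) : nat :=
  #|[set b in B | p \subset b]|.

Definition derived (A : {set {set T}}) (x : T) : {set {set T}} :=
  [set b :\ x | b in A & x \in b].

Definition is_CQS (g n s : nat) (S : {set T}) (G : {set {set T}})
    (A : {set {set T}}) : Prop :=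
  [/\ #|S| = s,
      partition G (~: S),
      #|G| = n /\ (forall Gr, Gr \in G -> #|Gr| = g),
      (forall b, b \in A -> #|b| = 4) &
      (forall t : {set T}, #|t| = 3 ->
         if [exists Gr in G, t \subset S :|: Gr]
         then nblocks A t = 0
         else nblocks A t = 1)].

Definition is_IKTS (v h : nat) (Y H : {set T}) (B : {set {set T}}) : Prop :=
  [/\ #|Y| = v, H \subset Y /\ #|H| = h,
      (forall b, b \in B -> (b \subset Y) /\ #|b| = 3),
      (forall p : {set T}, p \subset Y -> #|p| = 2 ->
         if p \subset H then nblocks B p = 0 else nblocks B p = 1) &
      exists P : {set {set {set T}}},
        [/\ partition P B,
            (forall C, C \in P -> is_PC C Y \/ is_PC C (Y :\: H)),
            #|[set C in P | is_PC C Y]| = (v - h) %/ 2 &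
            #|[set C in P | is_PC C (Y :\: H)]| = (h - 1) %/ 2]].

Definition is_KF (g n : nat) (Z : {set T}) (G : {set {set T}})
    (B : {set {set T}}) : Prop :=
  [/\ partition G Z, #|G| = n /\ (forall Gr, Gr \in G -> #|Gr| = g),
      (forall b, b \in B ->
         [/\ b \subset Z, #|b| = 3 &
             forall Gr, Gr \in G -> #|b :&: Gr| <= 1]),
      (forall x y, x \in Z -> y \in Z ->
         ~~ [exists Gr in G, (x \in Gr) && (y \in Gr)] ->
         nblocks B [set x; y] = 1) &
      exists P : {set {set {set T}}},
        partition P B /\
        (forall C, C \in P -> exists2 Gr, Gr \in G & is_PC C (Z :\: Gr))].

Definition is_RDCQS (g n s : nat) (S : {set T}) (G : {set {set T}})
    (A : {set {set T}}) : Prop :=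
  [/\ is_CQS g n s S G A,
      (forall Gr x, Gr \in G -> x \in Gr ->
         is_IKTS (g * n + s - 1) (g + s - 1) ([set: T] :\ x)
                 ((Gr :|: S) :\ x) (derived A x)) &
      (forall x, x \in S -> is_KF g n (~: S) G (derived A x))].

End Designs.

(* Main.v *)
Require Import Defs.
From mathcomp Require Import all_boot.
Set Implicit Arguments. Unset Strict Implicit. Unset Printing Implicit Defensive.

Notation NN := (8 * 4 + 2).

Definition bl : seq (seq nat) := [:: [:: 0; 1; 2; 17]; [:: 0; 1; 3; 30]; [:: 0; 1; 4; 5]; [:: 0; 1; 6; 21]; [:: 0; 1; 7; 26]; [:: 0; 1; 8; 25]; [:: 0; 1; 9; 24]; [:: 0; 1; 10; 11]; [:: 0; 1; 12; 27]; [:: 0; 1; 13; 20]; [:: 0; 1; 14; 19]; [:: 0; 1; 15; 33]; [:: 0; 1; 16; 31]; [:: 0; 1; 18; 32]; [:: 0; 1; 22; 23]; [:: 0; 1; 28; 29]; [:: 0; 2; 3; 5]; [:: 0; 2; 4; 18]; [:: 0; 2; 6; 8]; [:: 0; 2; 7; 11]; [:: 0; 2; 9; 32]; [:: 0; 2; 10; 24]; [:: 0; 2; 12; 14]; [:: 0; 2; 13; 15]; [:: 0; 2; 16; 30]; [:: 0; 2; 19; 21]; [:: 0; 2; 20; 22]; [:: 0; 2; 23; 27]; [:: 0; 2; 25; 33]; [:: 0; 2; 26; 28]; [:: 0; 2; 29; 31]; [:: 0; 3; 4; 31]; [:: 0; 3; 6; 19]; [:: 0; 3; 7; 10]; [::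 0; 3; 8; 11]; [:: 0; 3; 9; 26]; [:: 0; 3; 12; 15]; [:: 0; 3; 13; 33]; [:: 0; 3; 14; 17]; [:: 0; 3; 16; 29]; [:: 0; 3; 18; 21]; [:: 0; 3; 20; 23]; [:: 0; 3; 22; 32]; [:: 0; 3; 24; 27]; [:: 0; 3; 25; 28]; [:: 0; 4; 6; 30]; [:: 0; 4; 7; 29]; [:: 0; 4; 9; 11]; [:: 0; 4; 10; 14]; [:: 0; 4; 13; 23]; [:: 0; 4; 15; 19]; [:: 0; 4; 17; 21]; [:: 0; 4; 22; 26]; [:: 0; 4; 25; 27]; [:: 0; 5; 6; 17]; [:: 0; 5; 7; 28]; [:: 0; 5; 8; 29]; [:: 0; 5; 9; 30]; [:: 0; 5; 10; 21]; [:: 0; 5; 11; 32]; [:: 0; 5; 12; 23]; [:: 0; 5; 13; 24]; [:: 0; 5; 14; 25]; [:: 0; 5; 15; 22]; [:: 0; 5; 16; 27]; [:: 0; 5; 18; 19]; [:: 0; 5; 20; 31]; [:: 0; 5; 26; 33]; [:: 0; 6; 7; 13]; [:: 0; 6; 9; 15]; [:: 0; 6; 10; 28]; [:: 0; 6; 11; 33]; [:: 0; 6; 12; 22]; [:: 0; 6; 14; 20]; [:: 0; 6; 16; 26]; [:: 0; 6; 18; 24]; [:: 0; 6; 23; 29]; [:: 0; 6; 25; 31]; [:: 0; 6; 27; 32]; [:: 0; 7; 8; 15]; [:: 0; 7; 9; 33]; [:: 0; 7; 12; 21]; [:: 0; 7; 14; 23]; [:: 0; 7; 16; 25]; [:: 0;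 7; 17; 22]; [:: 0; 7; 18; 27]; [:: 0; 7; 19; 20]; [:: 0; 7; 24; 31]; [:: 0; 7; 30; 32]; [:: 0; 8; 9; 17]; [:: 0; 8; 10; 18]; [:: 0; 8; 13; 21]; [:: 0; 8; 14; 26]; [:: 0; 8; 19; 27]; [:: 0; 8; 22; 30]; [:: 0; 8; 23; 31]; [:: 0; 9; 10; 31]; [:: 0; 9; 12; 29]; [:: 0; 9; 13; 22]; [:: 0; 9; 14; 21]; [:: 0; 9; 16; 23]; [:: 0; 9; 18; 25]; [:: 0; 9; 19; 28]; [:: 0; 9; 20; 27]; [:: 0; 10; 12; 30]; [:: 0; 10; 13; 32]; [:: 0; 10; 15; 25]; [:: 0; 10; 16; 22]; [:: 0; 10; 17; 27]; [:: 0; 10; 19; 23]; [:: 0; 10; 20; 26]; [:: 0; 10; 29; 33]; [:: 0; 11; 12; 17]; [:: 0; 11; 13; 30]; [:: 0; 11; 14; 29]; [:: 0; 11; 15; 28]; [:: 0; 11; 16; 21]; [:: 0; 11; 18; 23]; [:: 0; 11; 19; 24]; [:: 0; 11; 20; 25]; [:: 0; 11; 22; 27]; [:: 0; 11; 26; 31]; [:: 0; 12; 13; 25]; [:: 0; 12; 18; 26]; [:: 0; 12; 19; 31]; [:: 0; 13; 14; 27]; [:: 0; 13; 16; 19]; [:: 0; 13; 17; 28]; [:: 0; 13; 18; 31]; [:: 0; 13; 26; 29]; [:: 0; 14; 15; 32]; [:: 0; 14; 16; 18]; [:: 0; 14; 22; 24]; [:: 0; 14; 28; 30]; [:: 0;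 14; 31; 33]; [:: 0; 15; 16; 17]; [:: 0; 15; 18; 29]; [:: 0; 15; 20; 21]; [:: 0; 15; 23; 24]; [:: 0; 15; 26; 27]; [:: 0; 15; 30; 31]; [:: 0; 17; 18; 33]; [:: 0; 17; 19; 30]; [:: 0; 17; 20; 29]; [:: 0; 17; 23; 26]; [:: 0; 17; 24; 25]; [:: 0; 17; 31; 32]; [:: 0; 18; 20; 30]; [:: 0; 18; 22; 28]; [:: 0; 19; 22; 33]; [:: 0; 19; 25; 26]; [:: 0; 19; 29; 32]; [:: 0; 21; 22; 31]; [:: 0; 21; 23; 28]; [:: 0; 21; 24; 29]; [:: 0; 21; 25; 30]; [:: 0; 21; 26; 32]; [:: 0; 21; 27; 33]; [:: 0; 22; 25; 29]; [:: 0; 23; 25; 32]; [:: 0; 23; 30; 33]; [:: 0; 24; 26; 30]; [:: 0; 27; 28; 31]; [:: 0; 27; 29; 30]; [:: 1; 2; 3; 18]; [:: 1; 2; 4; 31]; [:: 1; 2; 5; 6]; [:: 1; 2; 7; 22]; [:: 1; 2; 8; 27]; [:: 1; 2; 9; 26]; [:: 1; 2; 10; 25]; [:: 1; 2; 11; 12]; [:: 1; 2; 13; 28]; [:: 1; 2; 14; 21]; [:: 1; 2; 15; 20]; [:: 1; 2; 16; 33]; [:: 1; 2; 19; 32]; [:: 1; 2; 23; 24]; [:: 1; 2; 29; 30]; [:: 1; 3; 4; 6]; [:: 1; 3; 5; 19]; [:: 1; 3; 7; 9]; [:: 1; 3; 8; 12]; [:: 1; 3; 10; 32]; [:: 1;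 3; 11; 25]; [:: 1; 3; 13; 15]; [:: 1; 3; 14; 16]; [:: 1; 3; 17; 31]; [:: 1; 3; 20; 22]; [:: 1; 3; 21; 23]; [:: 1; 3; 24; 28]; [:: 1; 3; 26; 33]; [:: 1; 3; 27; 29]; [:: 1; 4; 7; 20]; [:: 1; 4; 8; 11]; [:: 1; 4; 9; 12]; [:: 1; 4; 10; 27]; [:: 1; 4; 13; 16]; [:: 1; 4; 14; 33]; [:: 1; 4; 15; 18]; [:: 1; 4; 17; 30]; [:: 1; 4; 19; 22]; [:: 1; 4; 21; 24]; [:: 1; 4; 23; 32]; [:: 1; 4; 25; 28]; [:: 1; 4; 26; 29]; [:: 1; 5; 7; 31]; [:: 1; 5; 8; 30]; [:: 1; 5; 10; 12]; [:: 1; 5; 11; 15]; [:: 1; 5; 14; 24]; [:: 1; 5; 16; 20]; [:: 1; 5; 18; 22]; [:: 1; 5; 23; 27]; [:: 1; 5; 26; 28]; [:: 1; 6; 7; 18]; [:: 1; 6; 8; 29]; [:: 1; 6; 9; 30]; [:: 1; 6; 10; 31]; [:: 1; 6; 11; 22]; [:: 1; 6; 12; 32]; [:: 1; 6; 13; 24]; [:: 1; 6; 14; 25]; [:: 1; 6; 15; 26]; [:: 1; 6; 16; 23]; [:: 1; 6; 17; 28]; [:: 1; 6; 19; 20]; [:: 1; 6; 27; 33]; [:: 1; 7; 8; 14]; [:: 1; 7; 10; 16]; [:: 1; 7; 11; 29]; [:: 1; 7; 12; 33]; [:: 1; 7; 13; 23]; [:: 1; 7; 15; 21]; [:: 1;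 7; 17; 27]; [:: 1; 7; 19; 25]; [:: 1; 7; 24; 30]; [:: 1; 7; 28; 32]; [:: 1; 8; 9; 16]; [:: 1; 8; 10; 33]; [:: 1; 8; 13; 22]; [:: 1; 8; 15; 24]; [:: 1; 8; 17; 26]; [:: 1; 8; 18; 23]; [:: 1; 8; 19; 28]; [:: 1; 8; 20; 21]; [:: 1; 8; 31; 32]; [:: 1; 9; 10; 18]; [:: 1; 9; 11; 19]; [:: 1; 9; 14; 22]; [:: 1; 9; 15; 27]; [:: 1; 9; 20; 28]; [:: 1; 9; 23; 31]; [:: 1; 10; 13; 30]; [:: 1; 10; 14; 23]; [:: 1; 10; 15; 22]; [:: 1; 10; 17; 24]; [:: 1; 10; 19; 26]; [:: 1; 10; 20; 29]; [:: 1; 10; 21; 28]; [:: 1; 11; 13; 31]; [:: 1; 11; 14; 32]; [:: 1; 11; 16; 26]; [:: 1; 11; 17; 23]; [:: 1; 11; 18; 28]; [:: 1; 11; 20; 24]; [:: 1; 11; 21; 27]; [:: 1; 11; 30; 33]; [:: 1; 12; 13; 18]; [:: 1; 12; 14; 31]; [:: 1; 12; 15; 30]; [:: 1; 12; 16; 29]; [:: 1; 12; 17; 22]; [:: 1; 12; 19; 24]; [:: 1; 12; 20; 25]; [:: 1; 12; 21; 26]; [:: 1; 12; 23; 28]; [:: 1; 13; 14; 26]; [:: 1; 13; 19; 27]; [:: 1; 14; 15; 28]; [:: 1; 14; 17; 20]; [:: 1; 14; 18; 29]; [:: 1; 14; 27; 30]; [:: 1; 15; 16; 32]; [:: 1;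 15; 17; 19]; [:: 1; 15; 23; 25]; [:: 1; 15; 29; 31]; [:: 1; 16; 17; 18]; [:: 1; 16; 19; 30]; [:: 1; 16; 21; 22]; [:: 1; 16; 24; 25]; [:: 1; 16; 27; 28]; [:: 1; 18; 19; 33]; [:: 1; 18; 20; 31]; [:: 1; 18; 21; 30]; [:: 1; 18; 24; 27]; [:: 1; 18; 25; 26]; [:: 1; 19; 21; 31]; [:: 1; 19; 23; 29]; [:: 1; 20; 23; 33]; [:: 1; 20; 26; 27]; [:: 1; 20; 30; 32]; [:: 1; 22; 24; 29]; [:: 1; 22; 25; 30]; [:: 1; 22; 26; 31]; [:: 1; 22; 27; 32]; [:: 1; 22; 28; 33]; [:: 1; 23; 26; 30]; [:: 1; 24; 26; 32]; [:: 1; 24; 31; 33]; [:: 1; 25; 27; 31]; [:: 1; 28; 30; 31]; [:: 2; 3; 4; 19]; [:: 2; 3; 6; 7]; [:: 2; 3; 8; 23]; [:: 2; 3; 9; 28]; [:: 2; 3; 10; 27]; [:: 2; 3; 11; 26]; [:: 2; 3; 12; 13]; [:: 2; 3; 14; 29]; [:: 2; 3; 15; 22]; [:: 2; 3; 16; 21]; [:: 2; 3; 17; 33]; [:: 2; 3; 20; 32]; [:: 2; 3; 24; 25]; [:: 2; 3; 30; 31]; [:: 2; 4; 5; 7]; [:: 2; 4; 6; 20]; [:: 2; 4; 8; 10]; [:: 2; 4; 9; 13]; [:: 2; 4; 11; 32]; [:: 2; 4; 12; 26]; [:: 2; 4; 14; 16]; [:: 2; 4; 15; 17]; [:: 2;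 4; 21; 23]; [:: 2; 4; 22; 24]; [:: 2; 4; 25; 29]; [:: 2; 4; 27; 33]; [:: 2; 4; 28; 30]; [:: 2; 5; 8; 21]; [:: 2; 5; 9; 12]; [:: 2; 5; 10; 13]; [:: 2; 5; 11; 28]; [:: 2; 5; 14; 17]; [:: 2; 5; 15; 33]; [:: 2; 5; 16; 19]; [:: 2; 5; 18; 31]; [:: 2; 5; 20; 23]; [:: 2; 5; 22; 25]; [:: 2; 5; 24; 32]; [:: 2; 5; 26; 29]; [:: 2; 5; 27; 30]; [:: 2; 6; 9; 31]; [:: 2; 6; 11; 13]; [:: 2; 6; 12; 16]; [:: 2; 6; 15; 25]; [:: 2; 6; 17; 21]; [:: 2; 6; 19; 23]; [:: 2; 6; 24; 28]; [:: 2; 6; 27; 29]; [:: 2; 7; 8; 19]; [:: 2; 7; 9; 30]; [:: 2; 7; 10; 31]; [:: 2; 7; 12; 23]; [:: 2; 7; 13; 32]; [:: 2; 7; 14; 25]; [:: 2; 7; 15; 26]; [:: 2; 7; 16; 27]; [:: 2; 7; 17; 24]; [:: 2; 7; 18; 29]; [:: 2; 7; 20; 21]; [:: 2; 7; 28; 33]; [:: 2; 8; 9; 15]; [:: 2; 8; 11; 17]; [:: 2; 8; 12; 30]; [:: 2; 8; 13; 33]; [:: 2; 8; 14; 24]; [:: 2; 8; 16; 22]; [:: 2; 8; 18; 28]; [:: 2; 8; 20; 26]; [:: 2; 8; 25; 31]; [:: 2; 8; 29; 32]; [:: 2; 9; 10; 17]; [:: 2; 9; 11; 33]; [:: 2;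 9; 14; 23]; [:: 2; 9; 16; 25]; [:: 2; 9; 18; 27]; [:: 2; 9; 19; 24]; [:: 2; 9; 20; 29]; [:: 2; 9; 21; 22]; [:: 2; 10; 11; 19]; [:: 2; 10; 12; 20]; [:: 2; 10; 15; 23]; [:: 2; 10; 16; 28]; [:: 2; 10; 21; 29]; [:: 2; 11; 14; 31]; [:: 2; 11; 15; 24]; [:: 2; 11; 16; 23]; [:: 2; 11; 18; 25]; [:: 2; 11; 20; 27]; [:: 2; 11; 21; 30]; [:: 2; 11; 22; 29]; [:: 2; 12; 15; 32]; [:: 2; 12; 17; 27]; [:: 2; 12; 18; 24]; [:: 2; 12; 19; 29]; [:: 2; 12; 21; 25]; [:: 2; 12; 22; 28]; [:: 2; 12; 31; 33]; [:: 2; 13; 14; 19]; [:: 2; 13; 16; 31]; [:: 2; 13; 17; 30]; [:: 2; 13; 18; 23]; [:: 2; 13; 20; 25]; [:: 2; 13; 21; 26]; [:: 2; 13; 22; 27]; [:: 2; 13; 24; 29]; [:: 2; 14; 15; 27]; [:: 2; 14; 20; 28]; [:: 2; 15; 16; 29]; [:: 2; 15; 18; 21]; [:: 2; 15; 19; 30]; [:: 2; 15; 28; 31]; [:: 2; 16; 17; 32]; [:: 2; 16; 18; 20]; [:: 2; 16; 24; 26]; [:: 2; 17; 18; 19]; [:: 2; 17; 20; 31]; [:: 2; 17; 22; 23]; [:: 2; 17; 25; 26]; [:: 2; 17; 28; 29]; [:: 2; 19; 20; 33]; [:: 2; 19; 22; 31]; [:: 2; 19; 25; 28]; [:: 2;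 19; 26; 27]; [:: 2; 20; 24; 30]; [:: 2; 21; 24; 33]; [:: 2; 21; 27; 28]; [:: 2; 21; 31; 32]; [:: 2; 23; 25; 30]; [:: 2; 23; 26; 31]; [:: 2; 23; 28; 32]; [:: 2; 23; 29; 33]; [:: 2; 24; 27; 31]; [:: 2; 25; 27; 32]; [:: 3; 4; 5; 20]; [:: 3; 4; 7; 8]; [:: 3; 4; 9; 24]; [:: 3; 4; 10; 29]; [:: 3; 4; 11; 28]; [:: 3; 4; 12; 27]; [:: 3; 4; 13; 14]; [:: 3; 4; 15; 30]; [:: 3; 4; 16; 23]; [:: 3; 4; 17; 22]; [:: 3; 4; 18; 33]; [:: 3; 4; 21; 32]; [:: 3; 4; 25; 26]; [:: 3; 5; 6; 8]; [:: 3; 5; 7; 21]; [:: 3; 5; 9; 11]; [:: 3; 5; 10; 14]; [:: 3; 5; 12; 32]; [:: 3; 5; 13; 27]; [:: 3; 5; 15; 17]; [:: 3; 5; 16; 18]; [:: 3; 5; 22; 24]; [:: 3; 5; 23; 25]; [:: 3; 5; 26; 30]; [:: 3; 5; 28; 33]; [:: 3; 5; 29; 31]; [:: 3; 6; 9; 22]; [:: 3; 6; 10; 13]; [:: 3; 6; 11; 14]; [:: 3; 6; 12; 29]; [:: 3; 6; 15; 18]; [:: 3; 6; 16; 33]; [:: 3; 6; 17; 20]; [:: 3; 6; 21; 24]; [:: 3; 6; 23; 26]; [:: 3; 6; 25; 32]; [:: 3; 6; 27; 30]; [:: 3; 6; 28; 31]; [:: 3; 7; 12; 14]; [:: 3;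 7; 13; 17]; [:: 3; 7; 16; 26]; [:: 3; 7; 18; 22]; [:: 3; 7; 20; 24]; [:: 3; 7; 25; 29]; [:: 3; 7; 28; 30]; [:: 3; 8; 9; 20]; [:: 3; 8; 10; 31]; [:: 3; 8; 13; 24]; [:: 3; 8; 14; 32]; [:: 3; 8; 15; 26]; [:: 3; 8; 16; 27]; [:: 3; 8; 17; 28]; [:: 3; 8; 18; 25]; [:: 3; 8; 19; 30]; [:: 3; 8; 21; 22]; [:: 3; 8; 29; 33]; [:: 3; 9; 10; 16]; [:: 3; 9; 12; 18]; [:: 3; 9; 13; 31]; [:: 3; 9; 14; 33]; [:: 3; 9; 15; 25]; [:: 3; 9; 17; 23]; [:: 3; 9; 19; 29]; [:: 3; 9; 21; 27]; [:: 3; 9; 30; 32]; [:: 3; 10; 11; 18]; [:: 3; 10; 12; 33]; [:: 3; 10; 15; 24]; [:: 3; 10; 17; 26]; [:: 3; 10; 19; 28]; [:: 3; 10; 20; 25]; [:: 3; 10; 21; 30]; [:: 3; 10; 22; 23]; [:: 3; 11; 12; 20]; [:: 3; 11; 13; 21]; [:: 3; 11; 16; 24]; [:: 3; 11; 17; 29]; [:: 3; 11; 22; 30]; [:: 3; 12; 16; 25]; [:: 3; 12; 17; 24]; [:: 3; 12; 19; 26]; [:: 3; 12; 21; 28]; [:: 3; 12; 22; 31]; [:: 3; 12; 23; 30]; [:: 3; 13; 16; 32]; [:: 3; 13; 18; 28]; [:: 3; 13; 19; 25]; [:: 3; 13; 20; 30]; [:: 3; 13; 22; 26]; [:: 3;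 13; 23; 29]; [:: 3; 14; 15; 20]; [:: 3; 14; 18; 31]; [:: 3; 14; 19; 24]; [:: 3; 14; 21; 26]; [:: 3; 14; 22; 27]; [:: 3; 14; 23; 28]; [:: 3; 14; 25; 30]; [:: 3; 15; 16; 28]; [:: 3; 15; 21; 29]; [:: 3; 16; 17; 30]; [:: 3; 16; 19; 22]; [:: 3; 16; 20; 31]; [:: 3; 17; 18; 32]; [:: 3; 17; 19; 21]; [:: 3; 17; 25; 27]; [:: 3; 18; 19; 20]; [:: 3; 18; 23; 24]; [:: 3; 18; 26; 27]; [:: 3; 18; 29; 30]; [:: 3; 20; 21; 33]; [:: 3; 20; 26; 29]; [:: 3; 20; 27; 28]; [:: 3; 21; 25; 31]; [:: 3; 22; 25; 33]; [:: 3; 22; 28; 29]; [:: 3; 24; 26; 31]; [:: 3; 24; 29; 32]; [:: 3; 24; 30; 33]; [:: 3; 26; 28; 32]; [:: 4; 5; 6; 21]; [:: 4; 5; 8; 9]; [:: 4; 5; 10; 25]; [:: 4; 5; 11; 30]; [:: 4; 5; 12; 29]; [:: 4; 5; 13; 28]; [:: 4; 5; 14; 15]; [:: 4; 5; 16; 31]; [:: 4; 5; 17; 24]; [:: 4; 5; 18; 23]; [:: 4; 5; 19; 33]; [:: 4; 5; 22; 32]; [:: 4; 5; 26; 27]; [:: 4; 6; 7; 9]; [:: 4; 6; 8; 22]; [:: 4; 6; 10; 12]; [:: 4; 6; 11; 15]; [:: 4; 6; 13; 32]; [:: 4; 6; 14; 28]; [:: 4; 6; 16; 18]; [:: 4;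 6; 17; 19]; [:: 4; 6; 23; 25]; [:: 4; 6; 24; 26]; [:: 4; 6; 27; 31]; [:: 4; 6; 29; 33]; [:: 4; 7; 10; 23]; [:: 4; 7; 11; 14]; [:: 4; 7; 12; 15]; [:: 4; 7; 13; 30]; [:: 4; 7; 16; 19]; [:: 4; 7; 17; 33]; [:: 4; 7; 18; 21]; [:: 4; 7; 22; 25]; [:: 4; 7; 24; 27]; [:: 4; 7; 26; 32]; [:: 4; 7; 28; 31]; [:: 4; 8; 13; 15]; [:: 4; 8; 14; 18]; [:: 4; 8; 17; 27]; [:: 4; 8; 19; 23]; [:: 4; 8; 21; 25]; [:: 4; 8; 26; 30]; [:: 4; 8; 29; 31]; [:: 4; 9; 10; 21]; [:: 4; 9; 14; 25]; [:: 4; 9; 15; 32]; [:: 4; 9; 16; 27]; [:: 4; 9; 17; 28]; [:: 4; 9; 18; 29]; [:: 4; 9; 19; 26]; [:: 4; 9; 20; 31]; [:: 4; 9; 22; 23]; [:: 4; 9; 30; 33]; [:: 4; 10; 11; 17]; [:: 4; 10; 13; 19]; [:: 4; 10; 15; 33]; [:: 4; 10; 16; 26]; [:: 4; 10; 18; 24]; [:: 4; 10; 20; 30]; [:: 4; 10; 22; 28]; [:: 4; 10; 31; 32]; [:: 4; 11; 12; 19]; [:: 4; 11; 13; 33]; [:: 4; 11; 16; 25]; [:: 4; 11; 18; 27]; [:: 4; 11; 20; 29]; [:: 4; 11; 21; 26]; [:: 4; 11; 22; 31]; [:: 4; 11; 23; 24]; [:: 4; 12; 13; 21]; [:: 4;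 12; 14; 22]; [:: 4; 12; 17; 25]; [:: 4; 12; 18; 30]; [:: 4; 12; 23; 31]; [:: 4; 13; 17; 26]; [:: 4; 13; 18; 25]; [:: 4; 13; 20; 27]; [:: 4; 13; 22; 29]; [:: 4; 13; 24; 31]; [:: 4; 14; 17; 32]; [:: 4; 14; 19; 29]; [:: 4; 14; 20; 26]; [:: 4; 14; 21; 31]; [:: 4; 14; 23; 27]; [:: 4; 14; 24; 30]; [:: 4; 15; 16; 21]; [:: 4; 15; 20; 25]; [:: 4; 15; 22; 27]; [:: 4; 15; 23; 28]; [:: 4; 15; 24; 29]; [:: 4; 15; 26; 31]; [:: 4; 16; 17; 29]; [:: 4; 16; 22; 30]; [:: 4; 17; 18; 31]; [:: 4; 17; 20; 23]; [:: 4; 18; 19; 32]; [:: 4; 18; 20; 22]; [:: 4; 18; 26; 28]; [:: 4; 19; 20; 21]; [:: 4; 19; 24; 25]; [:: 4; 19; 27; 28]; [:: 4; 19; 30; 31]; [:: 4; 21; 22; 33]; [:: 4; 21; 27; 30]; [:: 4; 21; 28; 29]; [:: 4; 23; 26; 33]; [:: 4; 23; 29; 30]; [:: 4; 25; 30; 32]; [:: 4; 25; 31; 33]; [:: 4; 27; 29; 32]; [:: 5; 6; 7; 22]; [:: 5; 6; 9; 10]; [:: 5; 6; 11; 26]; [:: 5; 6; 12; 31]; [:: 5; 6; 13; 30]; [:: 5; 6; 14; 29]; [:: 5; 6; 15; 16]; [:: 5; 6; 18; 25]; [:: 5; 6; 19; 24]; [:: 5; 6; 20; 33]; [:: 5;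 6; 23; 32]; [:: 5; 6; 27; 28]; [:: 5; 7; 8; 10]; [:: 5; 7; 9; 23]; [:: 5; 7; 11; 13]; [:: 5; 7; 12; 16]; [:: 5; 7; 14; 32]; [:: 5; 7; 15; 29]; [:: 5; 7; 17; 19]; [:: 5; 7; 18; 20]; [:: 5; 7; 24; 26]; [:: 5; 7; 25; 27]; [:: 5; 7; 30; 33]; [:: 5; 8; 11; 24]; [:: 5; 8; 12; 15]; [:: 5; 8; 13; 16]; [:: 5; 8; 14; 31]; [:: 5; 8; 17; 20]; [:: 5; 8; 18; 33]; [:: 5; 8; 19; 22]; [:: 5; 8; 23; 26]; [:: 5; 8; 25; 28]; [:: 5; 8; 27; 32]; [:: 5; 9; 14; 16]; [:: 5; 9; 15; 19]; [:: 5; 9; 18; 28]; [:: 5; 9; 20; 24]; [:: 5; 9; 22; 26]; [:: 5; 9; 27; 31]; [:: 5; 10; 11; 22]; [:: 5; 10; 15; 26]; [:: 5; 10; 16; 32]; [:: 5; 10; 17; 28]; [:: 5; 10; 18; 29]; [:: 5; 10; 19; 30]; [:: 5; 10; 20; 27]; [:: 5; 10; 23; 24]; [:: 5; 10; 31; 33]; [:: 5; 11; 12; 18]; [:: 5; 11; 14; 20]; [:: 5; 11; 16; 33]; [:: 5; 11; 17; 27]; [:: 5; 11; 19; 25]; [:: 5; 11; 21; 31]; [:: 5; 11; 23; 29]; [:: 5; 12; 13; 20]; [:: 5; 12; 14; 33]; [:: 5; 12; 17; 26]; [:: 5; 12; 19; 28]; [:: 5; 12; 21; 30]; [:: 5;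 12; 22; 27]; [:: 5; 12; 24; 25]; [:: 5; 13; 14; 22]; [:: 5; 13; 15; 23]; [:: 5; 13; 18; 26]; [:: 5; 13; 19; 31]; [:: 5; 14; 18; 27]; [:: 5; 14; 19; 26]; [:: 5; 14; 21; 28]; [:: 5; 14; 23; 30]; [:: 5; 15; 18; 32]; [:: 5; 15; 20; 30]; [:: 5; 15; 21; 27]; [:: 5; 15; 24; 28]; [:: 5; 15; 25; 31]; [:: 5; 16; 17; 22]; [:: 5; 16; 21; 26]; [:: 5; 16; 23; 28]; [:: 5; 16; 24; 29]; [:: 5; 16; 25; 30]; [:: 5; 17; 18; 30]; [:: 5; 17; 23; 31]; [:: 5; 18; 21; 24]; [:: 5; 19; 20; 32]; [:: 5; 19; 21; 23]; [:: 5; 19; 27; 29]; [:: 5; 20; 21; 22]; [:: 5; 20; 25; 26]; [:: 5; 20; 28; 29]; [:: 5; 22; 23; 33]; [:: 5; 22; 28; 31]; [:: 5; 22; 29; 30]; [:: 5; 24; 27; 33]; [:: 5; 24; 30; 31]; [:: 5; 26; 31; 32]; [:: 5; 28; 30; 32]; [:: 6; 7; 8; 23]; [:: 6; 7; 10; 11]; [:: 6; 7; 12; 27]; [:: 6; 7; 14; 31]; [:: 6; 7; 15; 30]; [:: 6; 7; 16; 17]; [:: 6; 7; 19; 26]; [:: 6; 7; 20; 25]; [:: 6; 7; 21; 33]; [:: 6; 7; 24; 32]; [:: 6; 7; 28; 29]; [:: 6; 8; 9; 11]; [:: 6; 8; 10; 24]; [:: 6; 8; 12; 14]; [:: 6;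 8; 13; 17]; [:: 6; 8; 15; 32]; [:: 6; 8; 16; 30]; [:: 6; 8; 18; 20]; [:: 6; 8; 19; 21]; [:: 6; 8; 25; 27]; [:: 6; 8; 26; 28]; [:: 6; 8; 31; 33]; [:: 6; 9; 12; 25]; [:: 6; 9; 13; 16]; [:: 6; 9; 14; 17]; [:: 6; 9; 18; 21]; [:: 6; 9; 19; 33]; [:: 6; 9; 20; 23]; [:: 6; 9; 24; 27]; [:: 6; 9; 26; 29]; [:: 6; 9; 28; 32]; [:: 6; 10; 15; 17]; [:: 6; 10; 16; 20]; [:: 6; 10; 19; 29]; [:: 6; 10; 21; 25]; [:: 6; 10; 23; 27]; [:: 6; 11; 12; 23]; [:: 6; 11; 16; 27]; [:: 6; 11; 17; 32]; [:: 6; 11; 18; 29]; [:: 6; 11; 19; 30]; [:: 6; 11; 20; 31]; [:: 6; 11; 21; 28]; [:: 6; 11; 24; 25]; [:: 6; 12; 13; 19]; [:: 6; 12; 15; 21]; [:: 6; 12; 17; 33]; [:: 6; 12; 18; 28]; [:: 6; 12; 20; 26]; [:: 6; 12; 24; 30]; [:: 6; 13; 14; 21]; [:: 6; 13; 15; 33]; [:: 6; 13; 18; 27]; [:: 6; 13; 20; 29]; [:: 6; 13; 22; 31]; [:: 6; 13; 23; 28]; [:: 6; 13; 25; 26]; [:: 6; 14; 15; 23]; [:: 6; 14; 16; 24]; [:: 6; 14; 19; 27]; [:: 6; 15; 19; 28]; [:: 6; 15; 20; 27]; [:: 6; 15; 22; 29]; [:: 6; 15; 24; 31]; [:: 6;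 16; 19; 32]; [:: 6; 16; 21; 31]; [:: 6; 16; 22; 28]; [:: 6; 16; 25; 29]; [:: 6; 17; 18; 23]; [:: 6; 17; 22; 27]; [:: 6; 17; 24; 29]; [:: 6; 17; 25; 30]; [:: 6; 17; 26; 31]; [:: 6; 18; 19; 31]; [:: 6; 19; 22; 25]; [:: 6; 20; 21; 32]; [:: 6; 20; 22; 24]; [:: 6; 20; 28; 30]; [:: 6; 21; 22; 23]; [:: 6; 21; 26; 27]; [:: 6; 21; 29; 30]; [:: 6; 23; 24; 33]; [:: 6; 23; 30; 31]; [:: 6; 25; 28; 33]; [:: 6; 29; 31; 32]; [:: 7; 8; 9; 24]; [:: 7; 8; 11; 12]; [:: 7; 8; 13; 28]; [:: 7; 8; 16; 31]; [:: 7; 8; 17; 18]; [:: 7; 8; 20; 27]; [:: 7; 8; 21; 26]; [:: 7; 8; 22; 33]; [:: 7; 8; 25; 32]; [:: 7; 8; 29; 30]; [:: 7; 9; 10; 12]; [:: 7; 9; 11; 25]; [:: 7; 9; 13; 15]; [:: 7; 9; 14; 18]; [:: 7; 9; 16; 32]; [:: 7; 9; 17; 31]; [:: 7; 9; 19; 21]; [:: 7; 9; 20; 22]; [:: 7; 9; 26; 28]; [:: 7; 9; 27; 29]; [:: 7; 10; 13; 26]; [:: 7; 10; 14; 17]; [:: 7; 10; 15; 18]; [:: 7; 10; 19; 22]; [:: 7; 10; 20; 33]; [:: 7; 10; 21; 24]; [:: 7; 10; 25; 28]; [:: 7; 10; 27; 30]; [:: 7; 10; 29; 32]; [:: 7;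 11; 16; 18]; [:: 7; 11; 17; 21]; [:: 7; 11; 20; 30]; [:: 7; 11; 22; 26]; [:: 7; 11; 24; 28]; [:: 7; 12; 13; 24]; [:: 7; 12; 17; 28]; [:: 7; 12; 18; 32]; [:: 7; 12; 19; 30]; [:: 7; 12; 20; 31]; [:: 7; 12; 22; 29]; [:: 7; 12; 25; 26]; [:: 7; 13; 14; 20]; [:: 7; 13; 16; 22]; [:: 7; 13; 18; 33]; [:: 7; 13; 19; 29]; [:: 7; 13; 21; 27]; [:: 7; 13; 25; 31]; [:: 7; 14; 15; 22]; [:: 7; 14; 16; 33]; [:: 7; 14; 19; 28]; [:: 7; 14; 21; 30]; [:: 7; 14; 24; 29]; [:: 7; 14; 26; 27]; [:: 7; 15; 16; 24]; [:: 7; 15; 17; 25]; [:: 7; 15; 20; 28]; [:: 7; 16; 20; 29]; [:: 7; 16; 21; 28]; [:: 7; 16; 23; 30]; [:: 7; 17; 20; 32]; [:: 7; 17; 23; 29]; [:: 7; 17; 26; 30]; [:: 7; 18; 19; 24]; [:: 7; 18; 23; 28]; [:: 7; 18; 25; 30]; [:: 7; 18; 26; 31]; [:: 7; 20; 23; 26]; [:: 7; 21; 22; 32]; [:: 7; 21; 23; 25]; [:: 7; 21; 29; 31]; [:: 7; 22; 23; 24]; [:: 7; 22; 27; 28]; [:: 7; 22; 30; 31]; [:: 7; 24; 25; 33]; [:: 7; 26; 29; 33]; [:: 8; 9; 10; 25]; [:: 8; 9; 12; 13]; [:: 8; 9; 14; 29]; [:: 8; 9; 18; 19]; [:: 8;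 9; 21; 28]; [:: 8; 9; 22; 27]; [:: 8; 9; 23; 33]; [:: 8; 9; 26; 32]; [:: 8; 9; 30; 31]; [:: 8; 10; 11; 13]; [:: 8; 10; 12; 26]; [:: 8; 10; 14; 16]; [:: 8; 10; 15; 19]; [:: 8; 10; 17; 32]; [:: 8; 10; 20; 22]; [:: 8; 10; 21; 23]; [:: 8; 10; 27; 29]; [:: 8; 10; 28; 30]; [:: 8; 11; 14; 27]; [:: 8; 11; 15; 18]; [:: 8; 11; 16; 19]; [:: 8; 11; 20; 23]; [:: 8; 11; 21; 33]; [:: 8; 11; 22; 25]; [:: 8; 11; 26; 29]; [:: 8; 11; 28; 31]; [:: 8; 11; 30; 32]; [:: 8; 12; 17; 19]; [:: 8; 12; 18; 22]; [:: 8; 12; 21; 31]; [:: 8; 12; 23; 27]; [:: 8; 12; 25; 29]; [:: 8; 13; 14; 25]; [:: 8; 13; 18; 29]; [:: 8; 13; 19; 32]; [:: 8; 13; 20; 31]; [:: 8; 13; 23; 30]; [:: 8; 13; 26; 27]; [:: 8; 14; 15; 21]; [:: 8; 14; 17; 23]; [:: 8; 14; 19; 33]; [:: 8; 14; 20; 30]; [:: 8; 14; 22; 28]; [:: 8; 15; 16; 23]; [:: 8; 15; 17; 33]; [:: 8; 15; 20; 29]; [:: 8; 15; 22; 31]; [:: 8; 15; 25; 30]; [:: 8; 15; 27; 28]; [:: 8; 16; 17; 25]; [:: 8; 16; 18; 26]; [:: 8; 16; 21; 29]; [:: 8; 17; 21; 30]; [:: 8; 17; 22; 29]; [:: 8;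 17; 24; 31]; [:: 8; 18; 21; 32]; [:: 8; 18; 24; 30]; [:: 8; 18; 27; 31]; [:: 8; 19; 20; 25]; [:: 8; 19; 24; 29]; [:: 8; 19; 26; 31]; [:: 8; 21; 24; 27]; [:: 8; 22; 23; 32]; [:: 8; 22; 24; 26]; [:: 8; 23; 24; 25]; [:: 8; 23; 28; 29]; [:: 8; 25; 26; 33]; [:: 8; 27; 30; 33]; [:: 9; 10; 11; 26]; [:: 9; 10; 13; 14]; [:: 9; 10; 15; 30]; [:: 9; 10; 19; 20]; [:: 9; 10; 22; 29]; [:: 9; 10; 23; 28]; [:: 9; 10; 24; 33]; [:: 9; 10; 27; 32]; [:: 9; 11; 12; 14]; [:: 9; 11; 13; 27]; [:: 9; 11; 15; 17]; [:: 9; 11; 16; 20]; [:: 9; 11; 18; 32]; [:: 9; 11; 21; 23]; [:: 9; 11; 22; 24]; [:: 9; 11; 28; 30]; [:: 9; 11; 29; 31]; [:: 9; 12; 15; 28]; [:: 9; 12; 16; 19]; [:: 9; 12; 17; 20]; [:: 9; 12; 21; 24]; [:: 9; 12; 22; 33]; [:: 9; 12; 23; 26]; [:: 9; 12; 27; 30]; [:: 9; 12; 31; 32]; [:: 9; 13; 18; 20]; [:: 9; 13; 19; 23]; [:: 9; 13; 24; 28]; [:: 9; 13; 26; 30]; [:: 9; 14; 15; 26]; [:: 9; 14; 19; 30]; [:: 9; 14; 20; 32]; [:: 9; 14; 24; 31]; [:: 9; 14; 27; 28]; [:: 9; 15; 16; 22]; [:: 9; 15; 18; 24]; [:: 9;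 15; 20; 33]; [:: 9; 15; 21; 31]; [:: 9; 15; 23; 29]; [:: 9; 16; 17; 24]; [:: 9; 16; 18; 33]; [:: 9; 16; 21; 30]; [:: 9; 16; 26; 31]; [:: 9; 16; 28; 29]; [:: 9; 17; 18; 26]; [:: 9; 17; 19; 27]; [:: 9; 17; 22; 30]; [:: 9; 18; 22; 31]; [:: 9; 18; 23; 30]; [:: 9; 19; 22; 32]; [:: 9; 19; 25; 31]; [:: 9; 20; 21; 26]; [:: 9; 20; 25; 30]; [:: 9; 22; 25; 28]; [:: 9; 23; 24; 32]; [:: 9; 23; 25; 27]; [:: 9; 24; 25; 26]; [:: 9; 24; 29; 30]; [:: 9; 26; 27; 33]; [:: 9; 28; 31; 33]; [:: 10; 11; 12; 27]; [:: 10; 11; 14; 15]; [:: 10; 11; 16; 31]; [:: 10; 11; 20; 21]; [:: 10; 11; 23; 30]; [:: 10; 11; 24; 29]; [:: 10; 11; 25; 33]; [:: 10; 11; 28; 32]; [:: 10; 12; 13; 15]; [:: 10; 12; 14; 28]; [:: 10; 12; 16; 18]; [:: 10; 12; 17; 21]; [:: 10; 12; 19; 32]; [:: 10; 12; 22; 24]; [:: 10; 12; 23; 25]; [:: 10; 12; 29; 31]; [:: 10; 13; 16; 29]; [:: 10; 13; 17; 20]; [:: 10; 13; 18; 21]; [:: 10; 13; 22; 25]; [:: 10; 13; 23; 33]; [:: 10; 13; 24; 27]; [:: 10; 13; 28; 31]; [:: 10; 14; 19; 21]; [:: 10; 14; 20; 24]; [:: 10; 14; 25; 29]; [:: 10;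 14; 27; 31]; [:: 10; 15; 16; 27]; [:: 10; 15; 20; 31]; [:: 10; 15; 21; 32]; [:: 10; 15; 28; 29]; [:: 10; 16; 17; 23]; [:: 10; 16; 19; 25]; [:: 10; 16; 21; 33]; [:: 10; 16; 24; 30]; [:: 10; 17; 18; 25]; [:: 10; 17; 19; 33]; [:: 10; 17; 22; 31]; [:: 10; 17; 29; 30]; [:: 10; 18; 19; 27]; [:: 10; 18; 20; 28]; [:: 10; 18; 23; 31]; [:: 10; 19; 24; 31]; [:: 10; 20; 23; 32]; [:: 10; 21; 22; 27]; [:: 10; 21; 26; 31]; [:: 10; 23; 26; 29]; [:: 10; 24; 25; 32]; [:: 10; 24; 26; 28]; [:: 10; 25; 26; 27]; [:: 10; 25; 30; 31]; [:: 10; 27; 28; 33]; [:: 11; 12; 13; 28]; [:: 11; 12; 15; 16]; [:: 11; 12; 21; 22]; [:: 11; 12; 24; 31]; [:: 11; 12; 25; 30]; [:: 11; 12; 26; 33]; [:: 11; 12; 29; 32]; [:: 11; 13; 14; 16]; [:: 11; 13; 15; 29]; [:: 11; 13; 17; 19]; [:: 11; 13; 18; 22]; [:: 11; 13; 20; 32]; [:: 11; 13; 23; 25]; [:: 11; 13; 24; 26]; [:: 11; 14; 17; 30]; [:: 11; 14; 18; 21]; [:: 11; 14; 19; 22]; [:: 11; 14; 23; 26]; [:: 11; 14; 24; 33]; [:: 11; 14; 25; 28]; [:: 11; 15; 20; 22]; [:: 11; 15; 21; 25]; [:: 11; 15; 26; 30]; [:: 11; 16; 17; 28]; [:: 11;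 16; 22; 32]; [:: 11; 16; 29; 30]; [:: 11; 17; 18; 24]; [:: 11; 17; 20; 26]; [:: 11; 17; 22; 33]; [:: 11; 17; 25; 31]; [:: 11; 18; 19; 26]; [:: 11; 18; 20; 33]; [:: 11; 18; 30; 31]; [:: 11; 19; 20; 28]; [:: 11; 19; 21; 29]; [:: 11; 21; 24; 32]; [:: 11; 22; 23; 28]; [:: 11; 24; 27; 30]; [:: 11; 25; 26; 32]; [:: 11; 25; 27; 29]; [:: 11; 26; 27; 28]; [:: 11; 28; 29; 33]; [:: 12; 13; 14; 29]; [:: 12; 13; 16; 17]; [:: 12; 13; 22; 23]; [:: 12; 13; 26; 31]; [:: 12; 13; 27; 33]; [:: 12; 13; 30; 32]; [:: 12; 14; 15; 17]; [:: 12; 14; 16; 30]; [:: 12; 14; 18; 20]; [:: 12; 14; 19; 23]; [:: 12; 14; 21; 32]; [:: 12; 14; 24; 26]; [:: 12; 14; 25; 27]; [:: 12; 15; 18; 31]; [:: 12; 15; 19; 22]; [:: 12; 15; 20; 23]; [:: 12; 15; 24; 27]; [:: 12; 15; 25; 33]; [:: 12; 15; 26; 29]; [:: 12; 16; 21; 23]; [:: 12; 16; 22; 26]; [:: 12; 16; 27; 31]; [:: 12; 17; 18; 29]; [:: 12; 17; 23; 32]; [:: 12; 17; 30; 31]; [:: 12; 18; 19; 25]; [:: 12; 18; 21; 27]; [:: 12; 18; 23; 33]; [:: 12; 19; 20; 27]; [:: 12; 19; 21; 33]; [:: 12; 20; 21; 29]; [:: 12; 20; 22; 30]; [:: 12;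 22; 25; 32]; [:: 12; 23; 24; 29]; [:: 12; 25; 28; 31]; [:: 12; 26; 27; 32]; [:: 12; 26; 28; 30]; [:: 12; 27; 28; 29]; [:: 12; 29; 30; 33]; [:: 13; 14; 15; 30]; [:: 13; 14; 17; 18]; [:: 13; 14; 23; 24]; [:: 13; 14; 28; 33]; [:: 13; 14; 31; 32]; [:: 13; 15; 16; 18]; [:: 13; 15; 17; 31]; [:: 13; 15; 19; 21]; [:: 13; 15; 20; 24]; [:: 13; 15; 22; 32]; [:: 13; 15; 25; 27]; [:: 13; 15; 26; 28]; [:: 13; 16; 20; 23]; [:: 13; 16; 21; 24]; [:: 13; 16; 25; 28]; [:: 13; 16; 26; 33]; [:: 13; 16; 27; 30]; [:: 13; 17; 22; 24]; [:: 13; 17; 23; 27]; [:: 13; 18; 19; 30]; [:: 13; 18; 24; 32]; [:: 13; 19; 20; 26]; [:: 13; 19; 22; 28]; [:: 13; 19; 24; 33]; [:: 13; 20; 21; 28]; [:: 13; 20; 22; 33]; [:: 13; 21; 22; 30]; [:: 13; 21; 23; 31]; [:: 13; 23; 26; 32]; [:: 13; 24; 25; 30]; [:: 13; 27; 28; 32]; [:: 13; 27; 29; 31]; [:: 13; 28; 29; 30]; [:: 13; 30; 31; 33]; [:: 14; 15; 16; 31]; [:: 14; 15; 18; 19]; [:: 14; 15; 24; 25]; [:: 14; 15; 29; 33]; [:: 14; 16; 17; 19]; [:: 14; 16; 20; 22]; [:: 14; 16; 21; 25]; [:: 14; 16; 23; 32]; [:: 14; 16; 26; 28]; [:: 14;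 16; 27; 29]; [:: 14; 17; 21; 24]; [:: 14; 17; 22; 25]; [:: 14; 17; 26; 29]; [:: 14; 17; 27; 33]; [:: 14; 17; 28; 31]; [:: 14; 18; 23; 25]; [:: 14; 18; 24; 28]; [:: 14; 19; 20; 31]; [:: 14; 19; 25; 32]; [:: 14; 20; 21; 27]; [:: 14; 20; 23; 29]; [:: 14; 20; 25; 33]; [:: 14; 21; 22; 29]; [:: 14; 21; 23; 33]; [:: 14; 22; 23; 31]; [:: 14; 24; 27; 32]; [:: 14; 25; 26; 31]; [:: 14; 28; 29; 32]; [:: 14; 29; 30; 31]; [:: 15; 16; 19; 20]; [:: 15; 16; 25; 26]; [:: 15; 16; 30; 33]; [:: 15; 17; 18; 20]; [:: 15; 17; 21; 23]; [:: 15; 17; 22; 26]; [:: 15; 17; 24; 32]; [:: 15; 17; 27; 29]; [:: 15; 17; 28; 30]; [:: 15; 18; 22; 25]; [:: 15; 18; 23; 26]; [:: 15; 18; 27; 30]; [:: 15; 18; 28; 33]; [:: 15; 19; 24; 26]; [:: 15; 19; 25; 29]; [:: 15; 20; 26; 32]; [:: 15; 21; 22; 28]; [:: 15; 21; 24; 30]; [:: 15; 21; 26; 33]; [:: 15; 22; 23; 30]; [:: 15; 22; 24; 33]; [:: 15; 25; 28; 32]; [:: 15; 29; 30; 32]; [:: 16; 17; 20; 21]; [:: 16; 17; 26; 27]; [:: 16; 17; 31; 33]; [:: 16; 18; 19; 21]; [:: 16; 18; 22; 24]; [:: 16; 18; 23; 27]; [:: 16; 18; 25; 32]; [:: 16;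 18; 28; 30]; [:: 16; 18; 29; 31]; [:: 16; 19; 23; 26]; [:: 16; 19; 24; 27]; [:: 16; 19; 28; 31]; [:: 16; 19; 29; 33]; [:: 16; 20; 25; 27]; [:: 16; 20; 26; 30]; [:: 16; 21; 27; 32]; [:: 16; 22; 23; 29]; [:: 16; 22; 25; 31]; [:: 16; 22; 27; 33]; [:: 16; 23; 24; 31]; [:: 16; 23; 25; 33]; [:: 16; 26; 29; 32]; [:: 16; 30; 31; 32]; [:: 17; 18; 21; 22]; [:: 17; 18; 27; 28]; [:: 17; 19; 20; 22]; [:: 17; 19; 23; 25]; [:: 17; 19; 24; 28]; [:: 17; 19; 26; 32]; [:: 17; 19; 29; 31]; [:: 17; 20; 24; 27]; [:: 17; 20; 25; 28]; [:: 17; 20; 30; 33]; [:: 17; 21; 26; 28]; [:: 17; 21; 27; 31]; [:: 17; 22; 28; 32]; [:: 17; 23; 24; 30]; [:: 17; 23; 28; 33]; [:: 17; 24; 26; 33]; [:: 17; 27; 30; 32]; [:: 18; 19; 22; 23]; [:: 18; 19; 28; 29]; [:: 18; 20; 21; 23]; [:: 18; 20; 24; 26]; [:: 18; 20; 25; 29]; [:: 18; 20; 27; 32]; [:: 18; 21; 25; 28]; [:: 18; 21; 26; 29]; [:: 18; 21; 31; 33]; [:: 18; 22; 27; 29]; [:: 18; 23; 29; 32]; [:: 18; 24; 25; 31]; [:: 18; 24; 29; 33]; [:: 18; 25; 27; 33]; [:: 18; 28; 31; 32]; [:: 19; 20; 23; 24]; [:: 19; 20; 29; 30]; [:: 19;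 21; 22; 24]; [:: 19; 21; 25; 27]; [:: 19; 21; 26; 30]; [:: 19; 21; 28; 32]; [:: 19; 22; 26; 29]; [:: 19; 22; 27; 30]; [:: 19; 23; 28; 30]; [:: 19; 24; 30; 32]; [:: 19; 25; 30; 33]; [:: 19; 26; 28; 33]; [:: 20; 21; 24; 25]; [:: 20; 21; 30; 31]; [:: 20; 22; 23; 25]; [:: 20; 22; 26; 28]; [:: 20; 22; 27; 31]; [:: 20; 22; 29; 32]; [:: 20; 23; 27; 30]; [:: 20; 23; 28; 31]; [:: 20; 24; 29; 31]; [:: 20; 25; 31; 32]; [:: 20; 26; 31; 33]; [:: 20; 27; 29; 33]; [:: 21; 22; 25; 26]; [:: 21; 23; 24; 26]; [:: 21; 23; 27; 29]; [:: 21; 23; 30; 32]; [:: 21; 24; 28; 31]; [:: 21; 28; 30; 33]; [:: 22; 23; 26; 27]; [:: 22; 24; 25; 27]; [:: 22; 24; 28; 30]; [:: 22; 24; 31; 32]; [:: 22; 29; 31; 33]; [:: 23; 24; 27; 28]; [:: 23; 25; 26; 28]; [:: 23; 25; 29; 31]; [:: 24; 25; 28; 29]; [:: 24; 26; 27; 29]; [:: 25; 26; 29; 30]; [:: 25; 27; 28; 30]; [:: 26; 27; 30; 31]; [:: 26; 28; 29; 31]].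
Definition res0 : seq (seq (seq nat)) := [:: [:: [:: 1; 16; 31]; [:: 2; 9; 32]; [:: 3; 25; 28]; [:: 4; 7; 29]; [:: 5; 15; 22]; [:: 6; 14; 20]; [:: 8; 13; 21]; [:: 10; 17; 27]; [:: 11; 19; 24]; [:: 12; 18; 26]; [:: 23; 30; 33]];
 [:: [:: 1; 13; 20]; [:: 2; 16; 30]; [:: 3; 9; 26]; [:: 4; 10; 14]; [:: 5; 11; 32]; [:: 6; 23; 29]; [:: 7; 8; 15]; [:: 12; 19; 31]; [:: 17; 24; 25]; [:: 18; 22; 28]; [:: 21; 27; 33]];
 [:: [:: 1; 10; 11]; [:: 2; 4; 18]; [:: 3; 16; 29]; [:: 5; 26; 33]; [:: 6; 27; 32]; [:: 7; 19; 20]; [:: 8; 9; 17]; [:: 12; 13; 25]; [:: 14; 28; 30]; [:: 15; 23; 24]; [:: 21; 22; 31]];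
 [:: [:: 1; 2; 17]; [:: 3; 22; 32]; [:: 4; 13; 23]; [:: 5; 16; 27]; [:: 6; 18; 24]; [:: 7; 12; 21]; [:: 8; 14; 26]; [:: 9; 19; 28]; [:: 10; 29; 33]; [:: 11; 20; 25]; [:: 15; 30; 31]];
 [:: [:: 1; 15; 33]; [:: 2; 19; 21]; [:: 3; 20; 23]; [:: 4; 25; 27]; [:: 5; 7; 28]; [:: 6; 16; 26]; [:: 8; 10; 18]; [:: 9; 12; 29]; [:: 11; 13; 30]; [:: 14; 22; 24]; [:: 17; 31; 32]];
 [:: [:: 1; 18; 32]; [:: 2; 23; 27]; [:: 3; 8; 11]; [:: 4; 15; 19]; [:: 5; 9; 30]; [:: 6; 12; 22]; [:: 7; 16; 25]; [:: 10; 20; 26]; [:: 13; 17; 28]; [:: 14; 31; 33]; [:: 21; 24; 29]];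
 [:: [:: 1; 28; 29]; [:: 2; 12; 14]; [:: 3; 4; 31]; [:: 5; 13; 24]; [:: 6; 11; 33]; [:: 7; 17; 22]; [:: 8; 19; 27]; [:: 9; 16; 23]; [:: 10; 15; 25]; [:: 18; 20; 30]; [:: 21; 26; 32]];
 [:: [:: 1; 4; 5]; [:: 2; 6; 8]; [:: 3; 13; 33]; [:: 7; 14; 23]; [:: 9; 18; 25]; [:: 10; 16; 22]; [:: 11; 12; 17]; [:: 15; 20; 21]; [:: 19; 29; 32]; [:: 24; 26; 30]; [:: 27; 28; 31]];
 [:: [:: 1; 9; 24]; [:: 2; 25; 33]; [:: 3; 12; 15]; [:: 4; 22; 26]; [:: 5; 18; 19]; [:: 6; 10; 28]; [:: 7; 30; 32]; [:: 8; 23; 31]; [:: 11; 16; 21]; [:: 13; 14; 27]; [:: 17; 20; 29]];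
 [:: [:: 1; 7; 26]; [:: 2; 20; 22]; [:: 3; 24; 27]; [:: 4; 9; 11]; [:: 5; 8; 29]; [:: 6; 25; 31]; [:: 10; 12; 30]; [:: 13; 16; 19]; [:: 14; 15; 32]; [:: 17; 18; 33]; [:: 21; 23; 28]];
 [:: [:: 1; 12; 27]; [:: 2; 10; 24]; [:: 3; 6; 19]; [:: 4; 17; 21]; [:: 5; 20; 31]; [:: 7; 9; 33]; [:: 8; 22; 30]; [:: 11; 15; 28]; [:: 13; 26; 29]; [:: 14; 16; 18]; [:: 23; 25; 32]];
 [:: [:: 1; 8; 25]; [:: 2; 26; 28]; [:: 3; 18; 21]; [:: 4; 6; 30]; [:: 5; 12; 23]; [:: 7; 24; 31]; [:: 9; 20; 27]; [:: 10; 13; 32]; [:: 11; 14; 29]; [:: 15; 16; 17]; [:: 19; 22; 33]];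
 [:: [:: 1; 22; 23]; [:: 2; 7; 11]; [:: 3; 14; 17]; [:: 5; 10; 21]; [:: 6; 9; 15]; [:: 13; 18; 31]; [:: 19; 25; 26]; [:: 27; 29; 30]];
 [:: [:: 1; 6; 21]; [:: 2; 29; 31]; [:: 3; 7; 10]; [:: 5; 14; 25]; [:: 9; 13; 22]; [:: 11; 18; 23]; [:: 15; 26; 27]; [:: 17; 19; 30]];
 [:: [:: 1; 14; 19]; [:: 2; 3; 5]; [:: 6; 7; 13]; [:: 9; 10; 31]; [:: 11; 22; 27]; [:: 15; 18; 29]; [:: 17; 23; 26]; [:: 21; 25; 30]];
 [:: [:: 1; 3; 30]; [:: 2; 13; 15]; [:: 5; 6; 17]; [:: 7; 18; 27]; [:: 9; 14; 21]; [:: 10; 19; 23]; [:: 11; 26; 31]; [:: 22; 25; 29]]].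
Definition inf0 : seq (seq (seq nat)) := [:: [:: [:: 1; 2; 19]; [:: 3; 17; 18]; [:: 5; 7; 14]; [:: 6; 29; 31]; [:: 9; 10; 27]; [:: 11; 25; 26]; [:: 13; 15; 22]; [:: 21; 23; 30]];
 [:: [:: 0; 7; 30]; [:: 2; 3; 20]; [:: 4; 18; 19]; [:: 6; 8; 15]; [:: 10; 11; 28]; [:: 12; 26; 27]; [:: 14; 16; 23]; [:: 22; 24; 31]];
 [:: [:: 0; 23; 25]; [:: 1; 8; 31]; [:: 3; 4; 21]; [:: 5; 19; 20]; [:: 7; 9; 16]; [:: 11; 12; 29]; [:: 13; 27; 28]; [:: 15; 17; 24]];
 [:: [:: 0; 2; 9]; [:: 1; 24; 26]; [:: 4; 5; 22]; [:: 6; 20; 21]; [:: 8; 10; 17]; [:: 12; 13; 30]; [:: 14; 28; 29]; [:: 16; 18; 25]];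
 [:: [:: 1; 3; 10]; [:: 2; 25; 27]; [:: 5; 6; 23]; [:: 7; 21; 22]; [:: 9; 11; 18]; [:: 13; 14; 31]; [:: 15; 29; 30]; [:: 17; 19; 26]];
 [:: [:: 0; 14; 15]; [:: 2; 4; 11]; [:: 3; 26; 28]; [:: 6; 7; 24]; [:: 8; 22; 23]; [:: 10; 12; 19]; [:: 16; 30; 31]; [:: 18; 20; 27]];
 [:: [:: 0; 17; 31]; [:: 1; 15; 16]; [:: 3; 5; 12]; [:: 4; 27; 29]; [:: 7; 8; 25]; [:: 9; 23; 24]; [:: 11; 13; 20]; [:: 19; 21; 28]];
 [:: [:: 0; 1; 18]; [:: 2; 16; 17]; [:: 4; 6; 13]; [:: 5; 28; 30]; [:: 8; 9; 26]; [:: 10; 24; 25]; [:: 12; 14; 21]; [:: 20; 22; 29]];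
 [:: [:: 1; 11; 14]; [:: 2; 7; 13]; [:: 3; 6; 25]; [:: 5; 26; 31]; [:: 9; 19; 22]; [:: 10; 15; 21]; [:: 17; 27; 30]; [:: 18; 23; 29]];
 [:: [:: 0; 6; 27]; [:: 2; 12; 15]; [:: 3; 8; 14]; [:: 4; 7; 26]; [:: 10; 20; 23]; [:: 11; 16; 22]; [:: 18; 28; 31]; [:: 19; 24; 30]];
 [:: [:: 0; 19; 29]; [:: 1; 7; 28]; [:: 3; 13; 16]; [:: 4; 9; 15]; [:: 5; 8; 27]; [:: 11; 21; 24]; [:: 12; 17; 23]; [:: 20; 25; 31]];
 [:: [:: 0; 21; 26]; [:: 1; 20; 30]; [:: 2; 8; 29]; [:: 4; 14; 17]; [:: 5; 10; 16]; [:: 6; 9; 28]; [:: 12; 22; 25]; [:: 13; 18; 24]];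
 [:: [:: 1; 22; 27]; [:: 2; 21; 31]; [:: 3; 9; 30]; [:: 5; 15; 18]; [:: 6; 11; 17]; [:: 7; 10; 29]; [:: 13; 23; 26]; [:: 14; 19; 25]];
 [:: [:: 0; 3; 22]; [:: 2; 23; 28]; [:: 4; 10; 31]; [:: 6; 16; 19]; [:: 7; 12; 18]; [:: 8; 11; 30]; [:: 14; 24; 27]; [:: 15; 20; 26]];
 [:: [:: 0; 5; 11]; [:: 1; 4; 23]; [:: 3; 24; 29]; [:: 7; 17; 20]; [:: 8; 13; 19]; [:: 9; 12; 31]; [:: 15; 25; 28]; [:: 16; 21; 27]];
 [:: [:: 0; 10; 13]; [:: 1; 6; 12]; [:: 2; 5; 24]; [:: 4; 25; 30]; [:: 8; 18; 21]; [:: 9; 14; 20]; [:: 16; 26; 29]; [:: 17; 22; 28]]].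
Definition inf1 : seq (seq (seq nat)) := [:: [:: [:: 1; 3; 26]; [:: 2; 9; 11]; [:: 5; 22; 23]; [:: 6; 7; 21]; [:: 10; 17; 19]; [:: 13; 30; 31]; [:: 14; 15; 29]; [:: 18; 25; 27]];
 [:: [:: 0; 2; 25]; [:: 1; 8; 10]; [:: 4; 21; 22]; [:: 5; 6; 20]; [:: 9; 16; 18]; [:: 12; 29; 30]; [:: 13; 14; 28]; [:: 17; 24; 26]];
 [:: [:: 0; 7; 9]; [:: 1; 24; 31]; [:: 3; 20; 21]; [:: 4; 5; 19]; [:: 8; 15; 17]; [:: 11; 28; 29]; [:: 12; 13; 27]; [:: 16; 23; 25]];
 [:: [:: 0; 23; 30]; [:: 2; 19; 20]; [:: 3; 4; 18]; [:: 6; 8; 31]; [:: 7; 14; 16]; [:: 10; 27; 28]; [:: 11; 12; 26]; [:: 15; 22; 24]];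
 [:: [:: 1; 18; 19]; [:: 2; 3; 17]; [:: 5; 7; 30]; [:: 6; 13; 15]; [:: 9; 26; 27]; [:: 10; 11; 25]; [:: 14; 21; 23]; [:: 22; 29; 31]];
 [:: [:: 0; 17; 18]; [:: 1; 2; 16]; [:: 4; 6; 29]; [:: 5; 12; 14]; [:: 8; 25; 26]; [:: 9; 10; 24]; [:: 13; 20; 22]; [:: 21; 28; 30]];
 [:: [:: 0; 1; 15]; [:: 3; 5; 28]; [:: 4; 11; 13]; [:: 7; 24; 25]; [:: 8; 9; 23]; [:: 12; 19; 21]; [:: 16; 17; 31]; [:: 20; 27; 29]];
 [:: [:: 0; 14; 31]; [:: 2; 4; 27]; [:: 3; 10; 12]; [:: 6; 23; 24]; [:: 7; 8; 22]; [:: 11; 18; 20]; [:: 15; 16; 30]; [:: 19; 26; 28]];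
 [:: [:: 1; 6; 27]; [:: 2; 5; 15]; [:: 3; 9; 14]; [:: 7; 26; 29]; [:: 10; 13; 23]; [:: 11; 17; 22]; [:: 18; 21; 31]; [:: 19; 25; 30]];
 [:: [:: 0; 5; 26]; [:: 1; 4; 14]; [:: 2; 8; 13]; [:: 6; 25; 28]; [:: 9; 12; 22]; [:: 10; 16; 21]; [:: 17; 20; 30]; [:: 18; 24; 29]];
 [:: [:: 0; 3; 13]; [:: 1; 7; 12]; [:: 4; 25; 31]; [:: 5; 24; 27]; [:: 8; 11; 21]; [:: 9; 15; 20]; [:: 16; 19; 29]; [:: 17; 23; 28]];
 [:: [:: 0; 6; 11]; [:: 2; 12; 31]; [:: 3; 24; 30]; [:: 4; 23; 26]; [:: 7; 10; 20]; [:: 8; 14; 19]; [:: 15; 18; 28]; [:: 16; 22; 27]];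
 [:: [:: 1; 11; 30]; [:: 2; 23; 29]; [:: 3; 22; 25]; [:: 5; 10; 31]; [:: 6; 9; 19]; [:: 7; 13; 18]; [:: 14; 17; 27]; [:: 15; 21; 26]];
 [:: [:: 0; 10; 29]; [:: 1; 22; 28]; [:: 2; 21; 24]; [:: 4; 9; 30]; [:: 5; 8; 18]; [:: 6; 12; 17]; [:: 13; 16; 26]; [:: 14; 20; 25]];
 [:: [:: 0; 21; 27]; [:: 1; 20; 23]; [:: 3; 8; 29]; [:: 4; 7; 17]; [:: 5; 11; 16]; [:: 9; 28; 31]; [:: 12; 15; 25]; [:: 13; 19; 24]];
 [:: [:: 0; 19; 22]; [:: 2; 7; 28]; [:: 3; 6; 16]; [:: 4; 10; 15]; [:: 8; 27; 30]; [:: 11; 14; 24]; [:: 12; 18; 23]; [:: 20; 26; 31]]].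

Definition toset (l : seq nat) : {set 'I_NN} := [set i : 'I_NN | val i \in l].
Definition mkclass (c : seq (seq nat)) : {set {set 'I_NN}} := [set:: map toset c].
Definition covl (c : seq (seq nat)) : {set 'I_NN} :=
  [set i : 'I_NN | has (fun l => val i \in l) c].
Definition wdisj (c : seq (seq nat)) : bool :=
  all (fun t1 : seq nat => all (fun t2 : seq nat => (t1 == t2) || ~~ has (fun n : nat => n \in t2) t1) c) c.
Definition goodt (t : seq nat) : bool := sorted ltn t && all (fun m => m < NN) t.

Lemma in_toset i l : (i \in toset l) = (val i \in l).
Proof. by rewrite inE. Qed.

Lemma toset_inj l1 l2 : goodt l1 -> goodt l2 -> toset l1 = toset l2 -> l1 = l2.
Proof.
move=> /andP[s1 a1] /andP[s2 a2] e.
apply: (irr_sorted_eq ltn_trans ltnn) => // n.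
have key : forall l l', all (fun m => m < NN) l -> toset l = toset l' -> n \in l -> n \in l'.
  move=> l l' al e' nl.
  have nN : n < NN by move/allP: al => /(_ n nl).
  by have := in_toset (Ordinal nN) l; rewrite e' in_toset /= nl => ->.
apply/idP/idP; first exact: key.
by apply: key => //; rewrite e.
Qed.

Lemma card_set_seq (X : finType) (s : seq X) (P : pred X) :
  uniq s -> #|[set b in [set:: s] | P b]| = count P s.
Proof.
move=> us; rewrite -size_filter.
have -> : #|[set b in [set:: s] | P b]| = #|[seq x <- s | P x]|.
  by apply: eq_card => b; rewrite !inE mem_filter andbC.
by apply/card_uniqP; rewrite filter_uniq.
Qed.

Lemma in_mkclass b c : (b \in mkclass c) = (b \in map toset c).
Proof. by rewrite inE. Qed.

Lemma cover_mk c : cover (mkclass c) = covl c.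
Proof.
apply/setP => i; rewrite inE.
apply/bigcupP/hasP.
  move=> [b]; rewrite in_mkclass => /mapP[l lc ->]; rewrite in_toset => il.
  by exists l.
move=> [l lc il]; exists (toset l); first by rewrite in_mkclass map_f.
by rewrite in_toset.
Qed.

Lemma trivI_mk c : wdisj c -> trivIset (mkclass c).
Proof.
move=> wd; apply/trivIsetP => A B.
rewrite !in_mkclass => /mapP[t1 t1c ->] /mapP[t2 t2c ->] ne.
have : (t1 == t2) || ~~ has (fun n => n \in t2) t1.
  by move/allP: wd => /(_ t1 t1c) /allP /(_ t2 t2c).
case: eqP => [e12|_] /=; first by rewrite e12 eqxx in ne.
move=> nh; rewrite -setI_eq0; apply/eqP/setP => i; rewrite !inE.
apply/negP => /andP[i1 i2]; move/negP: nh; apply; apply/hasP; by exists (val i).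
Qed.

Lemma isPC_mk c Z : wdisj c -> is_PC (mkclass c) Z = (covl c == Z).
Proof. by move=> wd; rewrite /is_PC trivI_mk // cover_mk. Qed.

Lemma uniq_flatten_disj (s : seq (seq (seq nat))) c1 c2 t :
  uniq (flatten s) -> c1 \in s -> c2 \in s -> c1 != c2 -> t \in c1 -> t \in c2 -> False.
Proof.
elim: s => [|c s IH] //=; rewrite cat_uniq => /and3P[_ hn uf].
rewrite !inE => /predU1P[->|h1] /predU1P[->|h2].
- by rewrite eqxx.
- move=> _ tc tc2; move/hasP: hn; apply; exists t => //; apply/flattenP; by exists c2.
- move=> _ tc tc2; move/hasP: hn; apply; exists t => //; apply/flattenP; by exists c1.
- exact: IH.
Qed.

Definition goodrs (rs : seq (seq (seq nat))) : bool :=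
  [&& all (all goodt) rs, uniq (flatten rs), uniq rs & all (fun c => c != [::]) rs].

Lemma mkclass_inj rs : goodrs rs -> {in rs &, injective mkclass}.
Proof.
move=> /and4P[gt uf ur ne] c1 c2 h1 h2 e.
case: (c1 =P c2) => // /eqP n12; exfalso.
have : c1 != [::] by move/allP: ne => /(_ c1 h1).
case: c1 h1 e n12 => [|t c1'] // h1 e n12 _.
have : toset t \in mkclass c2 by rewrite -e in_mkclass map_f // mem_head.
rewrite in_mkclass => /mapP[t' t'c2 et].
have g1 : goodt t by move/allP: gt => /(_ _ h1) /allP; apply; rewrite mem_head.
have g2 : goodt t' by move/allP: gt => /(_ _ h2) /allP; apply.
move: (toset_inj g1 g2 et) => ett.
apply: (uniq_flatten_disj uf h1 h2 n12 (t := t)); first by rewrite mem_head.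
by rewrite ett.
Qed.

Lemma partition_mk rs dl :
  goodrs rs -> {subset flatten rs <= dl} -> {subset dl <= flatten rs} ->
  partition [set:: map mkclass rs] [set:: map toset dl].
Proof.
move=> g s1 s2; have /and4P[gt uf ur ne] := g.
apply/and3P; split.
- apply/eqP/setP => b; rewrite [in RHS]inE; apply/bigcupP/idP.
  + move=> [C]; rewrite inE => /mapP[c cr ->]; rewrite in_mkclass => /mapP[t tc ->].
    apply: map_f; apply: s1; apply/flattenP; by exists c.
  + move=> /mapP[t td ->].
    have /flattenP[c cr tc] := s2 t td.
    exists (mkclass c); first by rewrite inE map_f.
    by rewrite in_mkclass map_f.
- apply/trivIsetP => A B; rewrite !inE => /mapP[c1 h1 ->] /mapP[c2 h2 ->] ne12.
  have n12 : c1 != c2 by apply: contraNneq ne12 => ->.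
  rewrite -setI_eq0; apply/eqP/setP => b; rewrite !inE.
  apply/negP => /andP[] => /mapP[t1 t1c ->] /mapP[t2 t2c et].
  have g1 : goodt t1 by move/allP: gt => /(_ _ h1) /allP; apply.
  have g2 : goodt t2 by move/allP: gt => /(_ _ h2) /allP; apply.
  move: (toset_inj g1 g2 et) => e; subst t2.
  exact: (uniq_flatten_disj uf h1 h2 n12 t1c t2c).
- apply/negP; rewrite inE => /mapP[c cr e].
  have : c != [::] by move/allP: ne => /(_ c cr).
  case: c cr e => [|t c] // cr e _.
  have : toset t \in mkclass (t :: c) by rewrite in_mkclass map_f // mem_head.
  by rewrite -e inE.
Qed.

Lemma count_PC rs Q : goodrs rs ->
  #|[set C in [set:: map mkclass rs] | Q C]| = count (fun c => Q (mkclass c)) rs.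
Proof.
move=> g; rewrite card_set_seq ?count_map //.
have /and4P[_ _ ur _] := g.
by rewrite map_inj_in_uniq //; apply: mkclass_inj.
Qed.

Definition natset (f : nat -> bool) : {set 'I_NN} := [set i : 'I_NN | f (val i)].
Definition eqf (f g : nat -> bool) : bool := all (fun n => f n == g n) (iota 0 NN).

Lemma in_natset f i : (i \in natset f) = f (val i).
Proof. by rewrite inE. Qed.

Lemma natset_eqb f g : (natset f == natset g) = eqf f g.
Proof.
apply/eqP/allP.
- move=> e n; rewrite mem_iota add0n => nN.
  by have := in_natset f (Ordinal nN); rewrite e in_natset /= => ->.
- move=> h; apply/setP => i; rewrite !in_natset.
  by apply/eqP/h; rewrite mem_iota add0n ltn_ord.
Qed.

Lemma card_natset f : #|natset f| = count f (iota 0 NN).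
Proof.
rewrite /natset cardsE cardE /enum_mem size_filter -enumT -val_enum_ord count_map.
by apply: eq_count.
Qed.

Definition S0 : {set 'I_NN} := natset (fun n => 32 <= n).
Definition grpf (j : nat) (n : nat) : bool := (n < 32) && (n %% 4 == j).
Definition grp (j : nat) : {set 'I_NN} := natset (grpf j).
Definition G0 : {set {set 'I_NN}} := [set grp (val j) | j : 'I_4].
Definition A0 : {set {set 'I_NN}} := [set:: map toset bl].
Definition forbn (a b c : nat) : bool :=
  has (fun j => all (fun p => (32 <= p) || (p %% 4 == j)) [:: a; b; c]) (iota 0 4).

Lemma toset_natset l : toset l = natset (fun n => n \in l).
Proof. by []. Qed.

Lemma G0P Gr : Gr \in G0 -> exists2 j, j < 4 & Gr = grp j.
Proof. by move/imsetP=> [j _ ->]; exists (val j) => //; apply: ltn_ord. Qed.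

Lemma grp_G0 j : j < 4 -> grp j \in G0.
Proof. by move=> j4; apply/imsetP; exists (Ordinal j4). Qed.

Lemma mem_Sg (i : 'I_NN) j : (i \in S0 :|: grp j) = (32 <= i) || (i %% 4 == j).
Proof. by rewrite !inE /grpf; case: (leqP 32 i). Qed.

Lemma forb_link (a b c : 'I_NN) :
  [exists Gr in G0, (a |: [set b; c]) \subset S0 :|: Gr] = forbn a b c.
Proof.
apply/existsP/hasP.
- move=> [Gr /andP[/G0P[j j4 ->]]]; rewrite !subUset !sub1set !mem_Sg => h.
  by exists j; [rewrite mem_iota | rewrite /= andbT].
- move=> [j]; rewrite mem_iota /= andbT => j4 h; exists (grp j).
  by rewrite grp_G0 // !subUset !sub1set !mem_Sg.
Qed.

Lemma sub3 (a b c : 'I_NN) l :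
  (a |: [set b; c] \subset toset l) = [&& val a \in l, val b \in l & val c \in l].
Proof. by rewrite !subUset !sub1set !in_toset. Qed.

Definition check_bl : bool :=
  uniq bl && all (fun l => goodt l && (count (fun n => n \in l) (iota 0 NN) == 4)) bl.
Lemma check_bl_ok : check_bl. Proof. by vm_compute. Qed.

Lemma in_setseq (X : finType) (s : seq X) b : (b \in [set:: s]) = (b \in s).
Proof. by rewrite inE. Qed.

Lemma bl_good l : l \in bl -> goodt l && (count (fun n => n \in l) (iota 0 NN) == 4).
Proof. by move=> lb; have /andP[_ /allP] := check_bl_ok; apply. Qed.

Lemma uniq_A0 : uniq (map toset bl).
Proof.
have /andP[ub al] := check_bl_ok.
rewrite map_inj_in_uniq; first exact: ub.
move=> l1 l2 h1 h2; apply: toset_inj.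
- by move/allP: al => /(_ l1 h1) /andP[].
- by move/allP: al => /(_ l2 h2) /andP[].
Qed.

Lemma nblocksA0 t : nblocks A0 t = count (fun l => t \subset toset l) bl.
Proof. by rewrite /nblocks card_set_seq ?uniq_A0 // count_map. Qed.

Definition cqs_checker (s : seq (seq nat)) : bool :=
  all (fun a => let la := filter (fun l => a \in l) s in
     all (fun b => let lab := filter (fun l => b \in l) la in
       all (fun c => [|| a == b, a == c, b == c |
                      count (fun l => c \in l) lab == (if forbn a b c then 0 else 1)])
     (iota 0 34)) (iota 0 34)) (iota 0 34).
Lemma cqs_check_ok : cqs_checker bl. Proof. by vm_compute. Qed.

Lemma cqs_checker_spec s a b c : cqs_checker s -> a < 34 -> b < 34 -> c < 34 ->
  a != b -> a != c -> b != c ->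
  count (fun l => [&& a \in l, b \in l & c \in l]) s = if forbn a b c then 0 else 1.
Proof.
move=> /allP /(_ a); rewrite mem_iota => h a34 b34 c34 ab ac bc.
move: (h a34) => /allP /(_ b); rewrite mem_iota => /(_ b34) /allP /(_ c).
rewrite mem_iota => /(_ c34).
rewrite (negbTE ab) (negbTE ac) (negbTE bc) /= => /eqP <-.
rewrite !count_filter; apply: eq_count => l /=.
by case: (a \in l); case: (b \in l); case: (c \in l).
Qed.

Lemma cqs3 (a b c : 'I_NN) : a != b -> a != c -> b != c ->
  nblocks A0 (a |: [set b; c]) = if forbn a b c then 0 else 1.
Proof.
move=> ab ac bc; rewrite nblocksA0.
rewrite -(cqs_checker_spec cqs_check_ok (ltn_ord a) (ltn_ord b) (ltn_ord c)) //.
by apply: eq_count => l; rewrite sub3.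
Qed.

Lemma card3 (t : {set 'I_NN}) : #|t| = 3 ->
  exists a b c, [/\ a != b, a != c, b != c & t = a |: [set b; c]].
Proof.
move=> t3; have : 0 < #|t| by rewrite t3.
move/card_gt0P=> [a at_].
have : #|t :\ a| == 2 by move: t3; rewrite (cardsD1 a) at_ add1n => -[->].
move/cards2P=> [b [c [bc e]]].
have hb : b \in t :\ a by rewrite e !inE eqxx.
have hc : c \in t :\ a by rewrite e !inE eqxx orbT.
exists a, b, c; split => //.
- by move: hb; rewrite !inE eq_sym => /andP[].
- by move: hc; rewrite !inE eq_sym => /andP[].
- by rewrite -e setD1K.
Qed.

Lemma grp_ne0 (j : 'I_4) : grp j != set0.
Proof.
have jN : val j < NN by apply: (leq_trans (ltn_ord j)).
apply/set0Pn; exists (Ordinal jN); rewrite in_natset /grpf /=.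
rewrite modn_small ?eqxx ?andbT //; by apply: (leq_trans (ltn_ord j)).
Qed.

Lemma G0_props : partition G0 (~: S0) /\ #|G0| = 4 /\ (forall Gr, Gr \in G0 -> #|Gr| = 8).
Proof.
have : trivIset G0 /\ {in 'I_4 &, injective (fun j : 'I_4 => grp j)}.
  apply: trivIimset.
  - move=> i j _ _ ji; rewrite -setI_eq0; apply/eqP/setP => k; rewrite !inE /grpf.
    apply/negP => /andP[/andP[_ /eqP ei] /andP[_ /eqP ej]].
    by move: ji; rewrite -val_eqE /= -ei -ej eqxx.
  - apply/imsetP => -[j _ e]; by move: (grp_ne0 j); rewrite -e eqxx.
case=> tI inj.
split; last split.
- apply/and3P; split => //.
  + rewrite cover_imset; apply/eqP/setP => i; rewrite !inE.
    apply/bigcupP/idP.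
    * by move=> [j _]; rewrite in_natset /grpf -ltnNge => /andP[].
    * rewrite -ltnNge => i32; exists (Ordinal (ltn_pmod i (isT : 0 < 4))) => //.
      by rewrite in_natset /grpf i32 /= eqxx.
  + apply/imsetP => -[j _ e]; by move: (grp_ne0 j); rewrite -e eqxx.
- by rewrite card_in_imset // card_ord.
- move=> Gr /G0P[j j4 ->]; rewrite card_natset.
  have : all (fun j => count (grpf j) (iota 0 NN) == 8) (iota 0 4) by vm_compute.
  by move/allP => /(_ j); rewrite mem_iota j4 => /(_ isT) /eqP.
Qed.

Lemma cqs_ok : is_CQS 8 4 2 S0 G0 A0.
Proof.
have [P [C Gs]] := G0_props.
split => //.
- by rewrite card_natset.
- move=> b; rewrite /A0 in_setseq => /mapP[l lb ->].
  have /andP[_ /eqP] := bl_good lb.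
  by rewrite toset_natset card_natset.
- move=> t /card3 [a [b [c [ab ac bc ->]]]].
  by rewrite forb_link cqs3 //; case: (forbn _ _ _).
Qed.

Definition dlg (s : seq (seq nat)) (n : nat) : seq (seq nat) :=
  [seq filter (fun m => m != n) l | l <- s & n \in l].
Definition dl (n : nat) : seq (seq nat) := dlg bl n.

Lemma toset_filter l (x : 'I_NN) : toset (filter (fun m => m != val x) l) = toset l :\ x.
Proof. by apply/setP => i; rewrite !inE mem_filter val_eqE. Qed.

Lemma derived_gen (s : seq (seq nat)) (x : 'I_NN) :
  derived [set:: map toset s] x = [set:: map toset (dlg s (val x))].
Proof.
apply/setP => b; rewrite in_setseq /derived /dlg.
apply/imsetP/mapP.
- move=> [B]; rewrite inE in_setseq => /andP[/mapP[l lb ->] xl] ->.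
  exists (filter (fun m => m != val x) l); last by rewrite toset_filter.
  apply/mapP; exists l => //; rewrite mem_filter lb andbT.
  by rewrite in_toset in xl.
- move=> [l' /mapP[l]]; rewrite mem_filter => /andP[xl lb] e1 e2.
  exists (toset l); last by rewrite e2 e1 toset_filter.
  by rewrite inE in_setseq map_f // in_toset xl.
Qed.

Lemma derived_A0 (x : 'I_NN) : derived A0 x = [set:: map toset (dl (val x))].
Proof. exact: derived_gen. Qed.

Lemma nblocks_derived (A : {set {set 'I_NN}}) (x : 'I_NN) (p : {set 'I_NN}) : x \notin p ->
  nblocks (derived A x) p = nblocks A (x |: p).
Proof.
move=> xp; rewrite /nblocks /derived.
have inj : {in [set B in A | x |: p \subset B] &, injective (fun B : {set 'I_NN} => B :\ x)}.
  move=> B1 B2; rewrite !inE => /andP[_ h1] /andP[_ h2] e.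
  have x1 : x \in B1 by move: h1; rewrite subUset sub1set => /andP[].
  have x2 : x \in B2 by move: h2; rewrite subUset sub1set => /andP[].
  by rewrite -(setD1K x1) e setD1K.
rewrite -(card_in_imset inj); congr #|pred_of_set _|; apply/setP => b; rewrite inE.
apply/andP/imsetP.
- move=> [/imsetP[B]]; rewrite inE => /andP[BA xB] -> sub.
  exists B => //; rewrite inE BA subUset sub1set xB /=.
  by move: sub; rewrite subsetD1 => /andP[].
- move=> [B]; rewrite inE => /andP[BA]; rewrite subUset sub1set => /andP[xB pB] ->.
  split; first by apply/imsetP; exists B => //; rewrite inE BA xB.
  by rewrite subsetD1 pB xp.
Qed.

Definition shift (n p : nat) : nat := if p < 32 then (p + n) %% 32 else p.
Definition rsx (n : nat) : seq (seq (seq nat)) :=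
  map (map (fun t => sort leq (map (shift n) t))) res0.
Definition covf (c : seq (seq nat)) (n : nat) : bool := has (fun l => n \in l) c.
Definition Yf (x n : nat) : bool := n != x.
Definition Hf (x n : nat) : bool := (grpf (x %% 4) n || (32 <= n)) && (n != x).
Definition YHf (x n : nat) : bool := Yf x n && ~~ Hf x n.

Definition ikts_check (n : nat) : bool :=
  let rs := rsx n in
  [&& goodrs rs, all (fun t => t \in dl n) (flatten rs), all (fun t => t \in flatten rs) (dl n),
      all wdisj rs, all (fun c => eqf (covf c) (Yf n) || eqf (covf c) (YHf n)) rs,
      count (fun c => eqf (covf c) (Yf n)) rs == 12,
      count (fun c => eqf (covf c) (YHf n)) rs == 4,
      count (Hf n) (iota 0 NN) == 9 &
      all (fun y => all (fun z => [|| y == n, z == n | forbn n y z == Hf n y && Hf n z])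
        (iota 0 NN)) (iota 0 NN)].

Lemma ikts_all : all ikts_check (iota 0 32).
Proof. by vm_compute. Qed.

Lemma covl_nat c : covl c = natset (covf c). Proof. by []. Qed.

Lemma Y_nat (x : 'I_NN) : [set: 'I_NN] :\ x = natset (Yf (val x)).
Proof. by apply/setP => i; rewrite !inE /Yf val_eqE andbT. Qed.

Lemma H_nat (x : 'I_NN) : (grp (val x %% 4) :|: S0) :\ x = natset (Hf (val x)).
Proof. by apply/setP => i; rewrite !inE /Hf val_eqE andbC. Qed.

Lemma YH_nat (x : 'I_NN) :
  ([set: 'I_NN] :\ x) :\: ((grp (val x %% 4) :|: S0) :\ x) = natset (YHf (val x)).
Proof. by apply/setP => i; rewrite inE H_nat Y_nat !in_natset /YHf andbC. Qed.

Lemma ikts_ok Gr x : Gr \in G0 -> x \in Gr ->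
  is_IKTS (8 * 4 + 2 - 1) (8 + 2 - 1) ([set: 'I_NN] :\ x) ((Gr :|: S0) :\ x) (derived A0 x).
Proof.
move=> /G0P[j j4 ->] xG.
have ej : j = val x %% 4 by move: xG; rewrite in_natset /grpf => /andP[_ /eqP].
have x32 : val x < 32 by move: xG; rewrite in_natset /grpf => /andP[].
subst j.
have : ikts_check (val x) by move/allP: ikts_all; apply; rewrite mem_iota.
move=> /and5P[g s1 s2 wd /and5P[cv c12 c4 h9 fb]].
have [_ _ _ bsz _] := cqs_ok.
split.
- by have := cardsD1 x [set: 'I_NN]; rewrite cardsT card_ord inE => -[].
- split; first by apply: setSD; apply: subsetT.
  by rewrite H_nat card_natset; apply/eqP.
- move=> b /imsetP[B]; rewrite inE => /andP[BA xB] ->; split.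
    by apply: setSD; apply: subsetT.
  by have := cardsD1 x B; rewrite xB (bsz B BA) => -[].
- move=> p pY /eqP/cards2P[y [z [yz ep]]]; subst p.
  have yY : y \in [set: 'I_NN] :\ x by apply: (subsetP pY); rewrite !inE eqxx.
  have zY : z \in [set: 'I_NN] :\ x by apply: (subsetP pY); rewrite !inE eqxx orbT.
  have xy : x != y by move: yY; rewrite !inE eq_sym andbT.
  have xz : x != z by move: zY; rewrite !inE eq_sym andbT.
  have xp : x \notin [set y; z] by rewrite !inE negb_or xy xz.
  rewrite nblocks_derived // cqs3 //.
  have -> : ([set y; z] \subset (grp (val x %% 4) :|: S0) :\ x) = forbn x y z.
    rewrite H_nat subUset !sub1set !in_natset.
    move/allP: fb => /(_ (val y)); rewrite mem_iota ltn_ord => /(_ isT).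
    move/allP => /(_ (val z)); rewrite mem_iota ltn_ord => /(_ isT).
    rewrite !val_eqE ![y == x]eq_sym ![z == x]eq_sym (negbTE xy) (negbTE xz) /=.
    by move/eqP=> ->.
  by case: forbn.
- exists [set:: map mkclass (rsx (val x))]; split.
  + rewrite derived_A0; apply: partition_mk => //.
    * by move=> t /(allP s1).
    * by move=> t /(allP s2).
  + move=> C; rewrite in_setseq => /mapP[c cr ->].
    rewrite !isPC_mk ?(allP wd c cr) // YH_nat Y_nat covl_nat !natset_eqb.
    by apply/orP; exact: (allP cv c cr).
  + rewrite count_PC //; transitivity 12; last by [].
    apply: (etrans _ (eqP c12)); apply: eq_in_count => c cr.
    by rewrite isPC_mk ?(allP wd c cr) // Y_nat covl_nat natset_eqb.
  + rewrite count_PC //; transitivity 4; last by [].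
    apply: (etrans _ (eqP c4)); apply: eq_in_count => c cr.
    by rewrite isPC_mk ?(allP wd c cr) // YH_nat covl_nat natset_eqb.
Qed.

Definition ZGf (j n : nat) : bool := (n < 32) && ~~ grpf j n.
Definition infres (n : nat) : seq (seq (seq nat)) := if n == 32 then inf0 else inf1.

Definition kf_check (n : nat) : bool :=
  let rs := infres n in
  [&& goodrs rs, all (fun t => t \in dl n) (flatten rs), all (fun t => t \in flatten rs) (dl n),
      all wdisj rs, all (fun c => has (fun j => eqf (covf c) (ZGf j)) (iota 0 4)) rs,
      all (fun l => [&& all (fun m => m < 32) l, count (fun m => m \in l) (iota 0 NN) == 3 &
               all (fun j => count (fun m => (m \in l) && grpf j m) (iota 0 NN) <= 1) (iota 0 4)])
        (dl n) &
      all (fun y => all (fun z => (y %% 4 == z %% 4) || ~~ forbn n y z) (iota 0 32)) (iota 0 32)].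

Lemma kf_all : kf_check 32 && kf_check 33.
Proof. by vm_compute. Qed.

Lemma ZG_nat j : ~: S0 :\: grp j = natset (ZGf j).
Proof. by apply/setP => i; rewrite !inE /ZGf -ltnNge andbC. Qed.

Lemma kf_ok x : x \in S0 -> is_KF 8 4 (~: S0) G0 (derived A0 x).
Proof.
move=> xS.
have x32 : 32 <= val x by rewrite in_natset in xS.
have : kf_check (val x).
  have /andP[k32 k33] := kf_all.
  have : val x \in iota 32 2 by rewrite mem_iota x32 ltn_ord.
  by rewrite /= !inE => /orP[/eqP -> | /eqP ->].
move=> /and5P[g s1 s2 wd /and3P[cv bk pr]].
have [P [C Gs]] := G0_props.
split => //.
- move=> b; rewrite derived_A0 in_setseq => /mapP[l ld ->].
  have /and3P[a32 c3 cg] := allP bk l ld.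
  split.
  + apply/subsetP => i; rewrite in_toset !inE -ltnNge => il.
    by move/allP: a32 => /(_ _ il).
  + by rewrite toset_natset card_natset; apply/eqP.
  + move=> Gr /G0P[j j4 ->].
    have -> : toset l :&: grp j = natset (fun m => (m \in l) && grpf j m).
      by apply/setP => i; rewrite !inE.
    by rewrite card_natset; move/allP: cg; apply; rewrite mem_iota.
- move=> y z yZ zZ ng.
  have y32 : val y < 32 by move: yZ; rewrite !inE -ltnNge.
  have z32 : val z < 32 by move: zZ; rewrite !inE -ltnNge.
  have yz4 : val y %% 4 != val z %% 4.
    apply: contraNneq ng => e; apply/existsP; exists (grp (val y %% 4)).
    rewrite grp_G0 ?ltn_pmod //= !in_natset /grpf y32 z32 /= -e eqxx //.
  have yz : y != z by apply: contraNneq yz4 => ->.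
  have xy : x != y by apply: contraTneq yZ => <-; rewrite inE xS.
  have xz : x != z by apply: contraTneq zZ => <-; rewrite inE xS.
  have xp : x \notin [set y; z] by rewrite !inE negb_or xy xz.
  rewrite nblocks_derived // cqs3 //.
  move/allP: pr => /(_ (val y)); rewrite mem_iota y32 => /(_ isT).
  move/allP => /(_ (val z)); rewrite mem_iota z32 => /(_ isT).
  by rewrite (negbTE yz4) /= => /negbTE ->.
- exists [set:: map mkclass (infres (val x))]; split.
  + rewrite derived_A0; apply: partition_mk => //.
    * by move=> t /(allP s1).
    * by move=> t /(allP s2).
  + move=> Cl; rewrite in_setseq => /mapP[c cr ->].
    have /hasP[j] := allP cv c cr; rewrite mem_iota /= => j4 e.
    exists (grp j); first exact: grp_G0.
    by rewrite isPC_mk ?(allP wd c cr) // ZG_nat covl_nat natset_eqb.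
Qed.

Theorem lemma3p1 :
  exists (S : {set 'I_(8 * 4 + 2)}) (G A : {set {set 'I_(8 * 4 + 2)}}),
    is_RDCQS 8 4 2 S G A.
Proof.
exists S0, G0, A0; split.
- exact: cqs_ok.
- move=> Gr x GrG xGr; exact: ikts_ok.
- move=> x xS; exact: kf_ok.
Qed.
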